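(* Let $(x'_n,y'_n)_{n\in\mathbb Z}$ be an elliptic sequence in general position on a biquadratic polynomial $F$, let $j_1<j_2$ be integers, $w_{j_1},\dots,w_{j_2}\in\mathbb C$, and $f(x)=\sum_{j=j_1}^{j_2}\dfrac{w_j}{x'_j-x}$. Let $A,C$ be polynomials and suppose that the rational function $y\mapsto A(y)(\mathcal Df)(y)-C(y)(\mathcal Mf)(y)$ is a polynomial. Then for $j=j_1,\dots,j_2-1$: $$\frac{w_{j+1}}{(y'_{j+1}-y'_j)X_2(x'_{j+1})}\left(\frac{A(y'_j)}{x'_{j+1}-x'_j}-\frac{C(y'_j)}2\right)=\frac{w_j}{(y'_j-y'_{j-1})X_2(x'_j)}\left(\frac{A(y'_j)}{x'_{j+1}-x'_j}+\frac{C(y'_j)}2\right).$$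
   Context: $F(x,y)=\sum_{i,j=0}^2c_{i,j}x^iy^j=Y_0(y)+xY_1(y)+x^2Y_2(y)=X_0(x)+yX_1(x)+y^2X_2(x)$. An elliptic sequence on $F$ is $(x_n,y_n)_{n\in\mathbb Z}$ such that for every $n$, $x_n,x_{n+1}$ are the two roots of $F(\cdot,y_n)$ and $y_{n-1},y_n$ the two roots of $F(x_n,\cdot)$; general position: the $x'_n$ distinct, the $y'_n$ distinct, $X_2,Y_2$ nonvanishing there. For a rational $f$ and a value $y$ with $x^\pm$ the two roots of $F(x,y)=0$: $(\mathcal Df)(y)=\frac{f(x^+)-f(x^-)}{x^+-x^-}$, $(\mathcal Mf)(y)=\frac{f(x^+)+f(x^-)}2$ (rational functions of $y$). *)

(* Defs.v *)
From HB Require Import structures.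
From mathcomp Require Import all_boot all_order all_algebra.
From mathcomp Require Import complex.
From mathcomp Require Import reals.
Set Implicit Arguments. Unset Strict Implicit. Unset Printing Implicit Defensive.
Import Order.TTheory GRing.Theory Num.Theory.
Local Open Scope ring_scope.

Section Biquadratic.
Variable K : fieldType.
Variable c : 'I_3 -> 'I_3 -> K.

Definition Feval (x y : K) : K :=
  \sum_(i < 3) \sum_(j < 3) c i j * x ^+ i * y ^+ j.

(* F = X_0(x) + y X_1(x) + y^2 X_2(x),  F = Y_0(y) + x Y_1(y) + x^2 Y_2(y) *)
Definition X2 (x : K) : K := \sum_(i < 3) c i ord_max * x ^+ i.
Definition Y2 (y : K) : K := \sum_(j < 3) c ord_max j * y ^+ j.

Definition elliptic_seq (xs ys : int -> K) : Prop :=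
  forall n : int,
    (forall x, Feval x (ys n) = Y2 (ys n) * (x - xs n) * (x - xs (n + 1))) /\
    (forall y, Feval (xs n) y = X2 (xs n) * (y - ys (n - 1)) * (y - ys n)).

Definition general_position (xs ys : int -> K) : Prop :=
  injective xs /\ injective ys /\
  (forall n, X2 (xs n) != 0) /\ (forall n, Y2 (ys n) != 0).
End Biquadratic.

(* sum over the integer range j1 <= j <= j2 (assuming j1 <= j2) *)
Definition isum (K : fieldType) (j1 j2 : int) (g : int -> K) : K :=
  \sum_(k < (`|j2 - j1|%N).+1) g (j1 + (k : nat)%:Z).

(* (D f)(y) and (M f)(y) evaluated at the two roots xp, xm of F(., y) *)
Definition Dop (K : fieldType) (f : K -> K) (xp xm : K) : K :=
  (f xp - f xm) / (xp - xm).
Definition Mop (K : fieldType) (f : K -> K) (xp xm : K) : K :=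
  (f xp + f xm) / 2.

(* Main.v *)
Require Import Defs.
From HB Require Import structures.
From mathcomp Require Import all_boot all_order all_algebra.
From mathcomp Require Import complex.
From mathcomp Require Import reals.
From mathcomp Require Import ring lra zify.
Import Order.TTheory GRing.Theory Num.Theory.
Local Open Scope ring_scope.

Lemma poly_vanish (K : numFieldType) (p : {poly K}) : (forall x, p.[x] = 0) -> p = 0.
Proof.
move=> H; apply/eqP; apply/negPn/negP => Hp.
set rs := mkseq (fun i => (i%:R : K)) (size p).
have H1 : all (root p) rs by apply/allP => x _; rewrite /root H.
have H2 : uniq rs.
  by rewrite map_inj_uniq ?iota_uniq // => a b /eqP; rewrite eqr_nat => /eqP.
by have := max_poly_roots Hp H1 H2; rewrite size_mkseq ltnn.
Qed.

Definition Yc (K : fieldType) (c : 'I_3 -> 'I_3 -> K) (i : 'I_3) (y : K) : K :=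
  \sum_(j < 3) c i j * y ^+ j.
Definition Ycp (K : fieldType) (c : 'I_3 -> 'I_3 -> K) (i : 'I_3) : {poly K} :=
  \sum_(j < 3) c i j *: 'X^j.

Arguments Yc {K}. Arguments Ycp {K}.
Lemma Ycp_eval (K : fieldType) (c : 'I_3 -> 'I_3 -> K) i y : (Ycp c i).[y] = Yc c i y.
Proof.
rewrite /Ycp horner_sum; apply: eq_bigr => k _; by rewrite hornerZ hornerXn.
Qed.

Definition o1 : 'I_3 := Ordinal (isT : (1 < 3)%N).
Lemma Feval_exp (K : fieldType) (c : 'I_3 -> 'I_3 -> K) x y :
  Feval c x y = Y2 c y * x ^+ 2 + Yc c o1 y * x + Yc c ord0 y.
Proof.
rewrite /Feval.
have -> : \sum_(i < 3) \sum_(j < 3) c i j * x ^+ i * y ^+ j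
   = \sum_(i < 3) Yc c i y * x ^+ i.
  apply: eq_bigr => i _; rewrite /Yc mulr_suml; apply: eq_bigr => k _.
  by rewrite -!mulrA [x ^+ _ * _]mulrC.
rewrite !big_ord_recl big_ord0 addr0 expr0 mulr1 expr1.
have -> : lift ord0 (lift ord0 (ord0 : 'I_1)) = ord_max :> 'I_3 by apply: val_inj.
have -> : lift ord0 (ord0 : 'I_2) = o1 by apply: val_inj.
rewrite /Y2 /Yc /=; ring.
Qed.

Definition regat (K : fieldType) (y0 : K) (h : K -> K) :=
  exists U V : {poly K}, V.[y0] != 0 /\ forall y, V.[y] != 0 -> h y = U.[y] / V.[y].

Arguments regat {K}.
Lemma reg_sum (K : fieldType) (I : Type) (r : seq I) (Pk : pred I) (g : I -> K -> K) y0 :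
  (forall i, Pk i -> regat y0 (g i)) -> regat y0 (fun y => \sum_(i <- r | Pk i) g i y).
Proof.
move=> Hg; elim: r => [|a r [U [V [HV0 HV]]]].
  exists 0, 1; split; first by rewrite hornerC oner_neq0.
  by move=> y _; rewrite big_nil horner0 mul0r.
case Pa: (Pk a).
  have [U1 [V1 [H10 H1]]] := Hg a Pa.
  exists (U1 * V + U * V1), (V1 * V); split; first by rewrite hornerM mulf_neq0.
  move=> y; rewrite hornerM mulf_eq0 negb_or => /andP[n1 n2].
  rewrite big_cons Pa H1 // HV // !hornerE; field.
  by rewrite n1 n2.
by exists U, V; split=> // y Hy; rewrite big_cons Pa HV.
Qed.

Theorem mainTheorem13 (R : realType) (c : 'I_3 -> 'I_3 -> R[i])
  (xs ys : int -> R[i]) (j1 j2 : int) (w : int -> R[i]) (A C : {poly R[i]}) :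
  elliptic_seq c xs ys ->
  general_position c xs ys ->
  j1 < j2 ->
  let f := fun x : R[i] => isum j1 j2 (fun j => w j / (xs j - x)) in
  (exists P : {poly R[i]},
     forall y xp xm : R[i],
       Y2 c y != 0 -> Feval c xp y = 0 -> Feval c xm y = 0 -> xp != xm ->
       (forall j : int, j1 <= j <= j2 -> xp != xs j /\ xm != xs j) ->
       A.[y] * Dop f xp xm - C.[y] * Mop f xp xm = P.[y]) ->
  forall j : int, j1 <= j <= j2 - 1 ->
    w (j + 1) / ((ys (j + 1) - ys j) * X2 c (xs (j + 1)))
      * (A.[ys j] / (xs (j + 1) - xs j) - C.[ys j] / 2)
    = w j / ((ys j - ys (j - 1)) * X2 c (xs j))
      * (A.[ys j] / (xs (j + 1) - xs j) + C.[ys j] / 2).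
Proof.
move=> Hell [Hxi [Hyi [HX2 HY2]]] Hj12 f [P HP] j /andP[Hj1 Hj2].
set n := `|j2 - j1|%N.
have Hn : j2 = j1 + n%:Z.
  rewrite /n abszE ger0_norm ?subr_ge0 ?ltW //; lia.
set kj := `|j - j1|%N.
have Hkj : j = j1 + kj%:Z.
  by rewrite /kj abszE ger0_norm ?subr_ge0 //; lia.
have kjn : (kj < n)%N.
  have : kj%:Z < n%:Z by move: Hj2; rewrite Hn Hkj; lia.
  by rewrite ltz_nat.
have two0 : (2 : R[i]) != 0 by rewrite pnatr_eq0.
pose Y1 y := Yc c o1 y.
pose Y0 y := Yc c ord0 y.
have Y2E : forall y, Y2 c y = (Ycp c ord_max).[y] by move=> y; rewrite Ycp_eval.
pose Np k : {poly R[i]} := (w k)%:P * (2%:P * A * Ycp c ord_max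
   - C * ((2 * xs k)%:P * Ycp c ord_max + Ycp c o1)).
pose Vp k : {poly R[i]} := (2 * X2 c (xs k))%:P * ('X - (ys (k-1))%:P) * ('X - (ys k)%:P).
pose g k y := (Np k).[y] / (Vp k).[y].
have Fk : forall k y, Feval c (xs k) y = X2 c (xs k) * (y - ys (k - 1)) * (y - ys k).
  by move=> k y; have [_ ->] := Hell k.
have claim : forall y, Y2 c y != 0 -> Y1 y ^+ 2 - 4 * Y2 c y * Y0 y != 0 ->
    (forall k, j1 - 1 <= k <= j2 -> y != ys k) ->
    P.[y] = \sum_(m < n.+1) g (j1 + m%:Z) y.
  move=> y hY2 hD hgood.
  set s := sqrtC (Y1 y ^+ 2 - 4 * Y2 c y * Y0 y).
  have hs : s ^+ 2 = Y1 y ^+ 2 - 4 * Y2 c y * Y0 y by rewrite sqrtCK.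
  have s0 : s != 0.
    by apply: contraNneq hD => e; rewrite -hs e expr0n.
  set xp := (- Y1 y + s) / (2 * Y2 c y).
  set xm := (- Y1 y - s) / (2 * Y2 c y).
  have hsum : xp + xm = - Y1 y / Y2 c y by rewrite /xp /xm; field; rewrite hY2.
  have hprod : xp * xm = Y0 y / Y2 c y.
    have -> : xp * xm = (Y1 y ^+ 2 - s ^+ 2) / (4 * Y2 c y ^+ 2).
      by rewrite /xp /xm; field; rewrite hY2.
    by rewrite hs; field; rewrite hY2.
  have Hfac : forall x, Feval c x y = Y2 c y * (x - xp) * (x - xm).
    move=> x; rewrite Feval_exp.
    have -> : Y2 c y * (x - xp) * (x - xm) = Y2 c y * (x ^+ 2 - (xp + xm) * x + xp * xm) by ring.
    by rewrite hsum hprod; rewrite /Y1 /Y0; field; rewrite hY2.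
  have hpm : xp != xm.
    rewrite -subr_eq0.
    have -> : xp - xm = s / Y2 c y by rewrite /xp /xm; field; rewrite hY2.
    by rewrite mulf_neq0 // invr_eq0.
  have hY1 : Y1 y = - (Y2 c y * (xp + xm)) by rewrite hsum; field; rewrite hY2.
  have Fne : forall k, j1 <= k <= j2 -> Feval c (xs k) y != 0.
    move=> k /andP[k1 k2]; rewrite Fk !mulf_neq0 // subr_eq0.
      by apply: hgood; apply/andP; split; lia.
    by apply: hgood; apply/andP; split; lia.
  rewrite -(HP y xp xm hY2); first last.
  - move=> k hk; have := Fne k hk; rewrite Hfac.
    rewrite !mulf_eq0 negb_or negb_or !subr_eq0 => /andP[/andP[_ h1] h2].
    by split; rewrite eq_sym.
  - exact: hpm.
  - by rewrite Hfac subrr mulr0.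
  - by rewrite Hfac subrr mulr0 mul0r.
  rewrite /Dop /Mop /f /isum -/n -sumrB -big_split /= mulr_suml mulr_suml.
  rewrite mulr_sumr mulr_sumr -sumrB; apply: eq_bigr => m _.
  have mn : (m <= n)%N by rewrite -ltnS.
  set k := j1 + m%:Z.
  have hk : j1 <= k <= j2 by apply/andP; split; rewrite /k; lia.
  have := Fne k hk; rewrite Hfac => hF.
  have ha1 : xs k - xp != 0 by move: hF; rewrite !mulf_eq0 !negb_or => /andP[/andP[]].
  have ha2 : xs k - xm != 0 by move: hF; rewrite !mulf_eq0 !negb_or => /andP[/andP[]].
  have Hden : (Vp k).[y] = 2 * (Y2 c y * (xs k - xp) * (xs k - xm)).
    transitivity (2 * Feval c (xs k) y); last by rewrite Hfac.
    rewrite Fk /Vp !(hornerM, hornerC, hornerXsubC). by rewrite !mulrA.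
  rewrite /g Hden /Np !(hornerM, hornerD, hornerN, hornerC) -Y2E.
  rewrite Ycp_eval -/(Y1 y) hY1.
  by field; rewrite ha1 ha2 hY2 subr_eq0 hpm.
have Hyj : forall a b, a != b -> ys a != ys b.
  by move=> a b hab; apply/eqP => /Hyi e; rewrite e eqxx in hab.
have Hxj : forall a b, a != b -> xs a != xs b.
  by move=> a b hab; apply/eqP => /Hxi e; rewrite e eqxx in hab.
have Ej := (Hell j).1.
have hY0j : Y0 (ys j) = Y2 c (ys j) * (xs j * xs (j + 1)).
  have -> : Y0 (ys j) = Feval c 0 (ys j) - (Y2 c (ys j) * 0 ^+ 2 + Y1 (ys j) * 0).
    by rewrite Feval_exp /Y1 /Y0; ring.
  by rewrite Ej; ring.
have hY1j : Y1 (ys j) = - (Y2 c (ys j) * (xs j + xs (j + 1))).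
  have -> : Y1 (ys j) = Feval c 1 (ys j) - Y2 c (ys j) - Y0 (ys j).
    by rewrite Feval_exp /Y1 /Y0; ring.
  by rewrite Ej hY0j; ring.
have jj1 : j != j + 1 by apply/eqP; lia.
pose Dp : {poly R[i]} := Ycp c o1 ^+ 2 - 4%:P * Ycp c ord_max * Ycp c ord0.
pose Pr : {poly R[i]} := \prod_(m < n.+2) ('X - (ys (j1 - 1 + m%:Z))%:P).
pose Bp := Ycp c ord_max * Dp * Pr.
pose i0 : 'I_n.+1 := Ordinal (ltn_trans kjn (ltnSn n)).
pose i1 : 'I_n.+1 := Ordinal (kjn : (kj.+1 < n.+1)%N).
have Hsplit : forall y, \sum_(m < n.+1) g (j1 + m%:Z) y
    = g j y + g (j + 1) y + \sum_(m < n.+1 | (m != i0) && (m != i1)) g (j1 + m%:Z) y.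
  move=> y; rewrite (bigD1 i0) //= (bigD1 (P := fun m => m != i0) i1) /=; last first.
    by apply/eqP => /(congr1 val) /= /eqP; rewrite -[kj.+1]addn1 -[X in _ == X]addn0 eqn_add2l.
  have -> : j1 + (kj.+1)%:Z = j + 1 by rewrite Hkj; lia.
  by rewrite -Hkj addrA.
have [U [V [HV0 HV]]] : regat (ys j)
    (fun y => \sum_(m < n.+1 | (m != i0) && (m != i1)) g (j1 + m%:Z) y).
  apply: reg_sum => m /andP[m0 m1]; exists (Np (j1 + m%:Z)), (Vp (j1 + m%:Z)); split => //.
  rewrite /Vp !(hornerM, hornerC, hornerXsubC) !mulf_neq0 ?HX2 // subr_eq0; apply: Hyj.
    apply/eqP => e; move/eqP: m1; apply; apply: val_inj => /=; lia.
  apply/eqP => e; move/eqP: m0; apply; apply: val_inj => /=; lia.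
pose Wj : {poly R[i]} := (2 * X2 c (xs j))%:P * ('X - (ys (j - 1))%:P).
pose Wj1 : {poly R[i]} := (2 * X2 c (xs (j + 1)))%:P * ('X - (ys (j + 1))%:P).
pose Zp : {poly R[i]} := ('X - (ys j)%:P) * Wj * Wj1 * V * P
   - (Wj1 * V * Np j + Wj * V * Np (j + 1) + ('X - (ys j)%:P) * Wj * Wj1 * U).
have HZ : Zp * (Bp * V) = 0.
  apply: poly_vanish => y; rewrite hornerM.
  have [->|hBV] := eqVneq (Bp * V).[y] 0; first by rewrite mulr0.
  move: (hBV); rewrite /Bp !hornerM !mulf_eq0 !negb_or => /andP[/andP[/andP[hY2y hDy] hPr] hVy].
  rewrite -Y2E in hY2y.
  have hDy' : Y1 y ^+ 2 - 4 * Y2 c y * Y0 y != 0.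
    by move: hDy; rewrite /Dp !(hornerM, hornerD, hornerN, hornerC, hornerXn) !Ycp_eval.
  have hgood : forall k, j1 - 1 <= k <= j2 -> y != ys k.
    move=> k hk; move: hPr; rewrite horner_prod prodf_seq_neq0 => /allP Hall.
    have km : (`|(k - (j1 - 1))%R|%N < n.+2)%N by lia.
    have := Hall (Ordinal km) (mem_index_enum _); rewrite hornerXsubC /= subr_eq0.
    by have -> : j1 - 1 + (`|(k - (j1 - 1))%R|%N)%:Z = k by lia.
  have := claim y hY2y hDy' hgood; rewrite Hsplit HV // => hPy.
  have hyj : y - ys j != 0 by rewrite subr_eq0 hgood //; apply/andP; split; lia.
  have hyj0 : y - ys (j - 1) != 0 by rewrite subr_eq0 hgood //; apply/andP; split; lia.
  have hyj1 : y - ys (j + 1) != 0 by rewrite subr_eq0 hgood //; apply/andP; split; lia.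
  move: hPy; rewrite /Zp /g /Vp addrK.
  rewrite !(hornerM, hornerD, hornerN, hornerC, hornerXsubC, hornerX) => ->.
  by field; rewrite hVy hyj1 hyj hyj0 !HX2.
have hY2j := HY2 j.
have hd : xs (j + 1) - xs j != 0 by rewrite subr_eq0 Hxj // eq_sym.
have Bp0 : Bp * V != 0.
  rewrite !mulf_neq0 //.
  - by apply/eqP => e; move: hY2j; rewrite Y2E e horner0 eqxx.
  - apply/eqP => e; have : Dp.[ys j] = 0 by rewrite e horner0.
    rewrite /Dp !(hornerM, hornerD, hornerN, hornerC, hornerXn) !Ycp_eval -/(Y1 (ys j)) -/(Y0 (ys j)).
    rewrite -/(Yc c ord_max (ys j)) -/(Y2 c (ys j)) hY0j hY1j.
    have -> : (- (Y2 c (ys j) * (xs j + xs (j + 1)))) ^+ 2 - 4 * Y2 c (ys j) *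
        (Y2 c (ys j) * (xs j * xs (j + 1))) = (Y2 c (ys j) * (xs (j + 1) - xs j)) ^+ 2 by ring.
    by move/eqP; rewrite expf_eq0 /= mulf_eq0 (negPf hY2j) (negPf hd).
  - by rewrite /Pr prodf_seq_neq0; apply/allP => m _; rewrite polyXsubC_eq0.
  - by apply/eqP => e; move: HV0; rewrite e horner0 eqxx.
have Zp0 : Zp = 0 by move/eqP: HZ; rewrite mulf_eq0 (negPf Bp0) orbF => /eqP.
have : Zp.[ys j] = 0 by rewrite Zp0 horner0.
rewrite /Zp /Np !(hornerM, hornerD, hornerN, hornerC, hornerXsubC, hornerX) subrr !mul0r !addr0 sub0r.
rewrite -!Y2E Ycp_eval -/(Y1 (ys j)) hY1j => H.
have hyd0 : ys j - ys (j - 1) != 0 by rewrite subr_eq0 Hyj //; apply/eqP; lia.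
have hyd1 : ys (j + 1) - ys j != 0 by rewrite subr_eq0 Hyj //; apply/eqP; lia.
set d := xs (j + 1) - xs j.
have clean : X2 c (xs (j + 1)) * (ys j - ys (j + 1)) * w j * (2 * A.[ys j] + C.[ys j] * d)
   + X2 c (xs j) * (ys j - ys (j - 1)) * w (j + 1) * (2 * A.[ys j] - C.[ys j] * d) = 0.
  have nz : - (2 * V.[ys j] * Y2 c (ys j)) != 0 by rewrite oppr_eq0 !mulf_neq0.
  apply: (mulIf nz); rewrite mul0r -H /d; ring.
apply/eqP; rewrite -subr_eq0; apply/eqP.
have -> : w (j + 1) / ((ys (j + 1) - ys j) * X2 c (xs (j + 1))) *
     (A.[ys j] / d - C.[ys j] / 2) -
   w j / ((ys j - ys (j - 1)) * X2 c (xs j)) * (A.[ys j] / d + C.[ys j] / 2)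
   = (X2 c (xs (j + 1)) * (ys j - ys (j + 1)) * w j * (2 * A.[ys j] + C.[ys j] * d)
   + X2 c (xs j) * (ys j - ys (j - 1)) * w (j + 1) * (2 * A.[ys j] - C.[ys j] * d))
     / (2 * d * (ys (j + 1) - ys j) * (ys j - ys (j - 1)) * X2 c (xs j) * X2 c (xs (j + 1))).
  by field; rewrite hd hyd0 hyd1 !HX2.
by rewrite clean mul0r.
Qed.
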